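(* Let $n>6$ be an integer and let $x=\binom{n}{3}-2(n-2)$. Then $$[x]^3_4-1\le k_4(k_3\le x)\le [x]^3_4.$$
   Context: All graphs are finite simple graphs. For a graph $g$ and an integer $r>1$, $k_r(g)$ denotes the number of subgraphs of $g$ isomorphic to the complete graph $K_r$. For $r<s$ and a non-negative integer $x$, $k_s(k_r\le x)$ denotes the maximum of $k_s(g)$ over all graphs $g$ with $k_r(g)\le x$. The $r$-canonical representation of a non-negative integer $x$ is obtained greedily: choose $a_r$ as large as possible with $\binom{a_r}{r}\le x$, then $a_{r-1}$ as large as possible with $\binom{a_{r-1}}{r-1}\le x-\binom{a_r}{r}$, and so on, until $x=\binom{a_r}{r}+\binom{a_{r-1}}{r-1}+\dots+\binom{a_{r-j}}{r-j}$; one has $a_r>a_{r-1}>\dots>a_{r-j}$. For $r<s$, $[x]^r_s=\binom{a_r}{s}+\binom{a_{r-1}}{s-1}+\dots+\binom{a_{r-j}}{s-j}$ (replace $r$ by $s$ in the representation). A binomial coefficient whose top entry is less than its bottom entry is taken to be $0$. *)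

(* Defs.v *)
From mathcomp Require Import all_boot.
Set Implicit Arguments. Unset Strict Implicit. Unset Printing Implicit Defensive.

Definition simple_graph (N : nat) (e : rel 'I_N) : Prop :=
  symmetric e /\ irreflexive e.

Definition clique (N : nat) (e : rel 'I_N) (A : {set 'I_N}) : bool :=
  [forall x in A, forall y in A, (x != y) ==> e x y].

Definition kr (N : nat) (e : rel 'I_N) (r : nat) : nat :=
  #|[set A : {set 'I_N} | (#|A| == r) && clique e A]|.

Definition is_max_ks_kr (s r x m : nat) : Prop :=
  (exists N (e : rel 'I_N), simple_graph e /\ kr e r <= x /\ kr e s = m) /\
  (forall N (e : rel 'I_N), simple_graph e -> kr e r <= x -> kr e s <= m).

(* largest a with 'C(a, k) <= x (for k >= 1 such a is < x + k + 1) *)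
Definition greedy_top (k x : nat) : nat :=
  \max_(a < x + k + 1 | 'C(a, k) <= x) a.

(* r-canonical representation of x as a list of pairs (a_i, i),
   x = sum 'C(a_i, i), computed greedily, stopping when the remainder is 0. *)
Fixpoint canon (r x : nat) : seq (nat * nat) :=
  match r with
  | 0 => [::]
  | r'.+1 =>
      if x == 0 then [::]
      else let a := greedy_top r x in (a, r) :: canon r' (x - 'C(a, r))
  end.

Definition shadow_bound (r s x : nat) : nat :=
  \sum_(p <- canon r x) 'C(p.1, p.2 + (s - r)).

(* Main.v *)
Require Import Defs.
From mathcomp Require Import all_boot zify.
From Stdlib Require Import Classical.
Set Implicit Arguments. Unset Strict Implicit. Unset Printing Implicit Defensive.

Fixpoint Sb (k : nat) (L : seq nat) : nat :=
  if L is a :: L' then 'C(a, k) + Sb k.-1 L' else 0.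
Fixpoint Tb (k : nat) (L : seq nat) : nat :=
  if L is a :: L' then (if k is k'.+1 then 'C(a, k') else 0) + Tb k.-1 L' else 0.
Fixpoint vld (k ub : nat) (L : seq nat) : bool :=
  if L is a :: L' then [&& k <= a, a < ub & (if k is k'.+1 then vld k' a L' else L' == [::])]
  else true.
Fixpoint dec (k : nat) (L : seq nat) : seq nat :=
  if L is a :: L' then (if k < a then a.-1 :: dec k.-1 L' else [:: k]) else [::].

Lemma Tb0 L : Tb 0 L = 0.
Proof. by elim: L => //= a L ->. Qed.

Lemma SbP k ub L : vld k ub L -> size L <= k ->
  Sb k L = Sb k (map predn L) + Sb k.-1 (map predn L).
Proof.
elim: L k ub => [|a L IH] [|k] ub //=.
case/and3P => ka aub H sz.
rewrite (IH k a H sz).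
case: a ka {aub H} => [|a] //= ka.
rewrite binS. lia.
Qed.

Lemma TbP k ub L : vld k ub L -> size L <= k ->
  Tb k L = Tb k (map predn L) + Tb k.-1 (map predn L).
Proof.
elim: L k ub => [|a L IH] [|k] ub //=.
case/and3P => ka aub H sz.
rewrite (IH k a H sz).
case: a ka {aub H} => [|a] //= ka.
case: k {IH ka sz} => [|k] /=.
  rewrite !bin0 !Tb0; lia.
rewrite binS. lia.
Qed.

Lemma TbS k L : size L <= k -> Tb k L = Sb k.-1 L.
Proof.
elim: L k => [|a L IH] [|k] //= sz.
by rewrite IH.
Qed.

Lemma SbD k L : Sb k (dec k L) <= Sb k (map predn L) + 1.
Proof.
elim: L k => [|a L IH] k //=.
case: ifP => _ /=.
  have := IH k.-1; lia.
rewrite binn; lia.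
Qed.

Lemma tight k ub L : vld k ub L -> ub <= k.+1 -> Tb k (map predn L) <= k.
Proof.
elim: L k ub => [|a L IH] [|k] ub //=.
- by rewrite Tb0.
- case/and3P => ka aub H ubk.
  have ea : a = k.+1 by lia.
  subst a; rewrite /= binn.
  have := IH k k.+1 H (leqnn _); lia.
Qed.

Lemma TbD k ub L : vld k ub L -> size L <= k ->
  Tb k (map predn L) <= Tb k (dec k L).
Proof.
elim: L k ub => [|a L IH] [|k] ub //=.
case/and3P => ka aub H sz.
case: ifP => ka' /=.
  have := IH k a H sz; lia.
have ea : a = k.+1 by lia.
subst a; rewrite /= binn binSn.
have := tight H (leqnn _); lia.
Qed.

Lemma vldD k ub L : vld k ub L -> k.+1 < ub -> vld k ub.-1 (dec k L).
Proof.
elim: L k ub => [|a L IH] [|k] ub //=.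
- case/andP => aub /eqP-> ub1.
  case: ifP => a0 /=; apply/andP; split => //; lia.
- case/and3P => ka aub H ub'.
  case: ifP => ka' /=; apply/and3P; split => //; try lia.
  apply: IH => //.
  by case: k {IH H ka ka' ub'}.
Qed.

Lemma vld_pred k ub L : vld k.+1 ub L -> size L <= k.+1 -> vld k ub.-1 (map predn L).
Proof.
elim: L k ub => [|a L IH] k ub; first by case: k.
case: k => [|k] /=.
  case/and3P => ka aub H sz.
  case: L {IH H} sz => //= _; apply/andP; split => //; lia.
case/and3P => ka aub H sz.
apply/and3P; split; try lia.
exact: IH.
Qed.

Lemma vld_mono k ub ub' L : vld k ub L -> ub <= ub' -> vld k ub' L.
Proof.
case: L => [|a L]; case: k => [|k] //=.
  case/andP => aub H u; apply/andP; split => //; lia.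
case/and3P => ka aub H u; apply/and3P; split => //; lia.
Qed.

Lemma trunc k ub L : vld k ub L ->
  exists L0, [/\ vld k ub L0, size L0 <= k, Sb k L0 <= Sb k L & Tb k L <= Tb k L0].
Proof.
elim: L k ub => [|a L IH] k ub /=.
  by move=> _; exists [::]; split => //; case: k.
case: k => [|k] /=.
  case/andP=> _ /eqP->; exists [::]; split => //; rewrite /= Tb0.
case/and3P => ka aub H.
have [L0 [v0 s0 h1 h2]] := IH k a H.
exists (a :: L0); split => /=; try lia.
Qed.

Lemma Sb_pos k ub L : 0 < k -> vld k ub L -> Sb k L = 0 -> L = [::].
Proof.
case: L => [|a L] //; case: k => [|k] //= _ /and3P[ka _ _].
have := bin_gt0 a k.+1; rewrite ka; lia.
Qed.


Section KKset.
Variable T : finType.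
Implicit Types (F G : {set {set T}}) (A B D : {set T}).

Definition shadow F : {set {set T}} :=
  [set B : {set T} | [exists x : T, (x \notin B) && ((x |: B) \in F)]].
Definition unif k F := forall A, A \in F -> #|A| = k.

Lemma shadowP F B : reflect (exists2 x, x \notin B & x |: B \in F) (B \in shadow F).
Proof.
rewrite inE; apply: (iffP existsP) => [[x /andP[]]|[x]]; first by exists x.
by exists x; apply/andP.
Qed.

Variable e : T.
Definition cmv F x A := [&& x \in A, e \notin A & e |: (A :\ x) \notin F].
Definition cf F x A := if cmv F x A then e |: (A :\ x) else A.
Definition compr F x := [set cf F x A | A in F].

Lemma cf_inj F x : {in F &, injective (cf F x)}.
Proof.
move=> A1 A2 H1 H2; rewrite /cf.
case E1: (cmv F x A1); case E2: (cmv F x A2) => //.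
- case/and3P: E1 => x1 e1 _; case/and3P: E2 => x2 e2 _ H.
  have h : A1 :\ x = A2 :\ x.
    rewrite -(setU1K (_ : e \notin A1 :\ x)); last by rewrite !inE (negbTE e1) andbF.
    rewrite H setU1K // !inE (negbTE e2) andbF //.
  by rewrite -(setD1K x1) -(setD1K x2) h.
- case/and3P: E1 => _ _ /negP; move=> nF H; apply: False_ind; apply: nF; by rewrite H.
- case/and3P: E2 => _ _ /negP; move=> nF H; apply: False_ind; apply: nF; by rewrite -H.
Qed.

Lemma card_comp F x : #|compr F x| = #|F|.
Proof. exact: card_in_imset (@cf_inj F x). Qed.

Lemma comp_unif k F x : unif k F -> unif k (compr F x).
Proof.
move=> uF B /imsetP[A AF ->]; rewrite /cf.
case: ifP => [/and3P[xA eA _]|_]; last exact: uF.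
rewrite cardsU1 !inE (negbTE eA) andbF /= -(uF A AF) (cardsD1 x A) xA.
by [].
Qed.

Lemma shadow_comp F x : x != e -> shadow (compr F x) \subset compr (shadow F) x.
Proof.
move=> xe; apply/subsetP => B /shadowP[y yB /imsetP[A AF HA]].
rewrite /cf in HA; case: ifPn HA => [/and3P[xA eA eAF] | nmv] HA.
- have [ye|ye] := eqVneq y e.
  + subst y.
    have BA : B = A :\ x.
      by rewrite -(setU1K yB) HA setU1K // !inE (negbTE eA) andbF.
    apply/imsetP; exists B.
      by apply/shadowP; exists x; rewrite BA ?setD1K // !inE eqxx.
    by rewrite /cf /cmv BA !inE eqxx.
  + have eB : e \in B.
      have : e \in y |: B by rewrite HA setU11.
      by rewrite !inE eq_sym (negbTE ye).
    have xB : x \notin B.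
      apply/negP => xB; have : x \in e |: (A :\ x) by rewrite -HA !inE xB orbT.
      by rewrite !inE eqxx (negbTE xe).
    have AxE : A :\ x = y |: (B :\ e).
      apply/setP => z; move/setP: HA => /(_ z); rewrite !inE.
      have [->|ze] := eqVneq z e.
        by rewrite (negbTE eA) eq_sym (negbTE ye) andbF.
      by rewrite /= => <-.
    have yA : y \in A :\ x by rewrite AxE setU11.
    have yD : y \notin x |: (B :\ e).
      by move: yA; rewrite !inE negb_or (negbTE yB) andbF => /andP[-> _].
    have DF : x |: (B :\ e) \in shadow F.
      apply/shadowP; exists y => //.
      have -> : y |: (x |: (B :\ e)) = A by rewrite setUCA -AxE setD1K.
      done.
    case: (boolP (B \in shadow F)) => BF.
      by apply/imsetP; exists B => //; rewrite /cf /cmv (negbTE xB).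
    apply/imsetP; exists (x |: (B :\ e)) => //.
    have E : e |: ((x |: (B :\ e)) :\ x) = B.
      by rewrite setU1K ?setD1K // !inE (negbTE xB) andbF.
    rewrite /cf /cmv E BF setU11 !inE eq_sym (negbTE xe) eqxx /=.
    by [].
- subst A.
  have BF : B \in shadow F by apply/shadowP; exists y.
  apply/imsetP; exists B => //; rewrite /cf.
  case: ifPn => // /and3P[xB eB /negP eBF]; exfalso; apply: eBF.
  have [ey|ey] := eqVneq e y.
    subst y; apply/shadowP; exists x.
      by rewrite !inE eqxx (negbTE xe).
    by rewrite setUCA setD1K.
  have eA : e \notin y |: B by rewrite !inE negb_or ey eB.
  have xA : x \in y |: B by rewrite !inE xB orbT.
  move: nmv; rewrite /cmv xA eA /= negbK => HF.
  apply/shadowP; exists y.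
    by rewrite !inE negb_or eq_sym ey (negbTE yB) andbF.
  suff -> : y |: (e |: (B :\ x)) = e |: ((y |: B) :\ x) by [].
  apply/setP => z; rewrite !inE.
  have [->|zy] := eqVneq z y.
    have yx : y != x by apply: contraNneq yB => ->.
    by rewrite /= yx orbT.
  by [].
Qed.

Definition mu F := #|[set A in F | e \notin A]|.

Lemma mu_comp F x A : A \in F -> cmv F x A -> mu (compr F x) < mu F.
Proof.
move=> AF mv.
pose S := [set A in F | e \notin cf F x A].
have le1 : mu (compr F x) <= #|S|.
  apply: (leq_trans _ (leq_imset_card (cf F x) S)).
  apply: subset_leq_card; apply/subsetP => B; rewrite inE => /andP[/imsetP[A' A'F ->] eB].
  by apply: imset_f; rewrite inE A'F.
apply: leq_ltn_trans le1 _; apply: proper_card; apply/properP; split.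
  apply/subsetP => A'; rewrite !inE => /andP[-> /=]; rewrite /cf.
  case: ifP => [/and3P[_ ->] //|_] //.
exists A; rewrite !inE AF /=; last by rewrite /cf mv setU11.
by case/and3P: mv.
Qed.

Definition stable F := [forall A in F, forall x in A, (e \notin A) ==> (e |: (A :\ x) \in F)].

Lemma stabilize k F : unif k F -> exists G,
  [/\ unif k G, #|G| = #|F|, #|shadow G| <= #|shadow F| & stable G].
Proof.
move: {2}(mu F).+1 (ltnSn (mu F)) => M.
elim: M F => // M IH F muF uF.
case: (boolP (stable F)) => st; first by exists F; split.
move/forallPn: st => [A]; rewrite negb_imply => /andP[AF /forallPn[x]].
rewrite negb_imply => /andP[xA]; rewrite negb_imply => /andP[eA eF].
have xe : x != e by apply: contraNneq eA => <-.
have mv : cmv F x A by rewrite /cmv xA eA eF.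
have [G [uG cG sG stG]] := IH (compr F x) (leq_trans (mu_comp AF mv) muF) (comp_unif (x:=x) uF).
exists G; split => //; first by rewrite cG card_comp.
apply: leq_trans sG _; rewrite -[#|shadow F|](card_comp (shadow F) x).
exact: subset_leq_card (shadow_comp _ xe).
Qed.

End KKset.


Lemma stableP (T : finType) (e : T) G A x : stable e G -> A \in G -> x \in A -> e \notin A ->
  e |: (A :\ x) \in G.
Proof.
by move=> st AG xA eA; move/forallP: st => /(_ A)/implyP/(_ AG)/forallP/(_ x)/implyP/(_ xA)/implyP/(_ eA).
Qed.

Definition F1of (T : finType) (e : T) (G : {set {set T}}) : {set {set T}} :=
  [set A :\ e | A in [set A in G | e \in A]].

Lemma decomp (T : finType) (e : T) k G : unif k.+1 G -> stable e G ->
  [/\ #|G| = #|[set A in G | e \notin A]| + #|F1of e G|,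
      unif k.+1 [set A in G | e \notin A],
      unif k (F1of e G),
      shadow [set A in G | e \notin A] \subset F1of e G
    & #|F1of e G| +
      #|shadow (F1of e G)| <= #|shadow G|].
Proof.
move=> uG stG.
set F0 := [set A in G | e \notin A].
set G1 := [set A in G | e \in A].
rewrite /F1of -/G1; set F1 := [set A :\ e | A in G1].
have cF1 : #|F1| = #|G1|.
  apply: card_in_imset => A1 A2; rewrite !inE => /andP[_ e1] /andP[_ e2] H.
  by rewrite -(setD1K e1) -(setD1K e2) H.
have F1P : forall B, B \in F1 -> exists2 A, A \in G /\ e \in A & B = A :\ e.
  by move=> B /imsetP[A]; rewrite inE => /andP[AG eA] ->; exists A.
have eF1 : forall B, B \in F1 -> e \notin B.
  by move=> B /F1P[A _ ->]; rewrite !inE eqxx.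
have eSF1 : forall D, D \in shadow F1 -> e \notin D.
  move=> D /shadowP[y yD /eF1]; rewrite !inE negb_or => /andP[_ ->] //.
split.
- rewrite cF1 addnC -(cardsID [set A : {set T} | e \in A] G); congr (_ + _); apply: eq_card => A;
  by rewrite !inE // andbC.
- by move=> A; rewrite inE => /andP[/uG].
- move=> B /F1P[A [AG eA] ->]; have := cardsD1 e A; rewrite eA uG //; lia.
- apply/subsetP => B /shadowP[y yB]; rewrite inE => /andP[yBG eyB].
  have eB : e \notin B by move: eyB; rewrite !inE negb_or => /andP[].
  have := stableP stG yBG (setU11 y B) eyB; rewrite setU1K // => eBG.
  apply/imsetP; exists (e |: B); first by rewrite inE eBG setU11.
  by rewrite setU1K.
- pose I := [set e |: D | D in shadow F1].
  have cI : #|I| = #|shadow F1|.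
    apply: card_in_imset => D1 D2 /eSF1 h1 /eSF1 h2 H.
    by rewrite -(setU1K h1) -(setU1K h2) H.
  have dis : F1 :&: I = set0.
    apply/setP => B; rewrite !inE; apply/negP => /andP[/F1P[A _ ->] /imsetP[D _ E]].
    have : e \in A :\ e by rewrite E setU11.
    by rewrite !inE eqxx.
  rewrite -cI -cardsUI dis cards0 addn0; apply: subset_leq_card.
  apply/subsetP => B; rewrite inE => /orP[/F1P[A [AG eA] ->]|/imsetP[D DS ->]].
    by apply/shadowP; exists e; rewrite ?setD1K // !inE eqxx.
  move: (DS) => /shadowP[y yD /F1P[A [AG eA] E]].
  have yA : y \in A :\ e by rewrite -E setU11.
  apply/shadowP; exists y.
    by move: yA; rewrite !inE negb_or (negbTE yD) => /andP[-> _].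
  by rewrite setUCA E setD1K.
Qed.

Theorem KK (T : finType) k : forall (F : {set {set T}}) ub L,
  unif k F -> vld k ub L -> Sb k L <= #|F| -> Tb k L <= #|shadow F|.
Proof.
elim: k => [|k IHk]; first by move=> *; rewrite Tb0.
suff H : forall N (F : {set {set T}}) ub L, #|F| <= N ->
  unif k.+1 F -> vld k.+1 ub L -> Sb k.+1 L <= #|F| -> Tb k.+1 L <= #|shadow F|.
  by move=> F ub L; apply: (H #|F|).
elim=> [|N IHN] F ub L FN uF vL SF.
- have [L0 [v0 s0 h1 h2]] := trunc vL.
  apply: leq_trans h2 _.
  by rewrite (Sb_pos (ltn0Sn _) v0) //; lia.
- have [L0 [v0 s0 h1 h2]] := trunc vL.
  apply: leq_trans h2 _.
  have SF0 : Sb k.+1 L0 <= #|F| by lia.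
  case: (set_0Vmem F) => [Fe | [A AF]].
    subst F; rewrite cards0 in SF0.
    by rewrite (Sb_pos (ltn0Sn _) v0) //; lia.
  have : 0 < #|A| by rewrite (uF A AF).
  case/card_gt0P => e eA.
  have [G [uG cG sG stG]] := stabilize e uF.
  apply: leq_trans sG.
  have [cG2 uF0 uF1 sF0 sF1] := decomp uG stG.
  set F0 := [set A in G | e \notin A] in cG2 uF0 sF0.
  set F1 := F1of e G in cG2 uF1 sF0 sF1.
  have F1pos : 0 < #|F1|.
    rewrite lt0n; apply/negP => /eqP/cards0_eq F1e.
    have [B BG] : exists B, B \in G.
      by apply/card_gt0P; rewrite cG; apply/card_gt0P; exists A.
    case: (boolP (e \in B)) => eB.
      have : B :\ e \in F1 by apply: imset_f; rewrite inE BG eB.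
      by rewrite F1e inE.
    have BF0 : B \in F0 by rewrite inE BG eB.
    have : 0 < #|B| by rewrite (uF0 B BF0).
    case/card_gt0P => x xB.
    have : B :\ x \in shadow F0.
      by apply/shadowP; exists x; rewrite ?setD1K // !inE eqxx.
    by move/(subsetP sF0); rewrite F1e inE.
  set L1 := map predn L0.
  have sL1 : size L1 <= k.+1 by rewrite size_map.
  have cl : Sb k L1 <= #|F1|.
    rewrite leqNgt; apply/negP => lt.
    have vd := vldD (vld_mono v0 (leq_maxl ub k.+3)) (leq_maxr ub k.+3).
    have : #|F0| < Sb k.+1 (dec k.+1 L0).
      rewrite ltnNge; apply/negP => le.
      have hN : #|F0| <= N by lia.
      have := IHN F0 _ _ hN uF0 vd le.
      have h3 := TbD v0 s0.
      have h4 := TbS sL1.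
      have h5 := subset_leq_card sF0.
      rewrite -/L1 /= in h3 h4 *.
      move=> h6; have := leq_ltn_trans (leq_trans h6 h5) lt; rewrite -h4 => h7.
      by have := leq_ltn_trans h3 h7; rewrite ltnn.
    have := SbD k.+1 L0; have := SbP v0 s0; rewrite -/L1 /=.
    move: SF0; rewrite -cG cG2; move: lt; set a := #|F0|; set b := #|F1|; lia.
  have := IHk F1 _ _ uF1 (vld_pred v0 s0) cl.
  rewrite (TbP v0 s0) (TbS sL1) -/L1 /=; move: sF1 cl; set a := #|F1|; set b := #|shadow F1|.
  move=> hh1 hh2 hh3; apply: leq_trans hh1; exact: leq_add.
Qed.


Lemma shadow_cl N (g : rel 'I_N) :
  shadow [set A : {set 'I_N} | (#|A| == 4) && clique g A] \subset
  [set A : {set 'I_N} | (#|A| == 3) && clique g A].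
Proof.
apply/subsetP => B /shadowP[y yB]; rewrite !inE => /andP[c4 cl].
rewrite cardsU1 yB in c4; apply/andP; split; first by move: c4; rewrite add1n eqSS.
apply/forallP => u; apply/implyP => uB; apply/forallP => v; apply/implyP => vB.
move/forallP: cl => /(_ u)/implyP/(_ (setU1r y uB))/forallP/(_ v)/implyP/(_ (setU1r y vB)).
done.
Qed.

Lemma upper m N (g : rel 'I_N) :
  kr g 3 <= 'C(m + 6,3) + 'C(m + 3,2) + (m + 2) ->
  kr g 4 <= 'C(m + 6,4) + 'C(m + 3,3) + 'C(m + 2,2).
Proof.
move=> h3; rewrite leqNgt; apply/negP => h4.
have hs := subset_leq_card (shadow_cl g).
rewrite /kr in h3 h4 hs.
have H := @KK _ 4 [set A : {set 'I_N} | (#|A| == 4) && clique g A] (m + 7)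
  [:: m + 6; m + 3; m + 2; 1].
have : Tb 4 [:: m + 6; m + 3; m + 2; 1] <= #|shadow [set A : {set 'I_N} | (#|A| == 4) && clique g A]|.
  apply: H.
  - by move=> A; rewrite inE => /andP[/eqP].
  - rewrite /=; apply/and3P; split; try lia; apply/and3P; split; try lia;
    apply/and3P; split; try lia; apply/andP; split; lia.
  - by rewrite /= bin1 addn0 !addnA addn1.
move=> ht; have := leq_trans (leq_trans ht hs) h3.
by rewrite /= bin1 bin0; lia.
Qed.


Lemma xE m : 'C(m + 7, 3) - 2 * (m + 7 - 2) = 'C(m + 6, 3) + 'C(m + 3, 2) + (m + 2).
Proof. rewrite !addnS !addn0 !binS !bin0 !bin1; lia. Qed.

Lemma bE m : 'C(m + 7, 4) + 2 = 'C(m + 6, 4) + 'C(m + 3, 3) + 'C(m + 2, 2) + 2 * 'C(m + 5, 2).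
Proof. rewrite !addnS !addn0 !binS !bin0 !bin1; lia. Qed.

Lemma greedyE k x a : 'C(a, k) <= x < 'C(a.+1, k) -> a < x + k + 1 -> greedy_top k x = a.
Proof.
move=> /andP[l1 l2] ab; apply/eqP; rewrite eqn_leq; apply/andP; split.
  apply/bigmax_leqP => i Ci; rewrite leqNgt; apply/negP => ai.
  have := leq_bin2l k ai; lia.
rewrite /greedy_top; exact: (@leq_bigmax_cond _ _ _ (Ordinal ab)).
Qed.

Ltac bexp := rewrite ?addnS ?addn0 ?binS ?bin0 ?bin1.

Lemma sbE m : shadow_bound 3 4 ('C(m + 6, 3) + 'C(m + 3, 2) + (m + 2)) =
  'C(m + 6, 4) + 'C(m + 3, 3) + 'C(m + 2, 2).
Proof.
set x := _ + _ + _.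
have g3 : greedy_top 3 x = m + 6.
  by apply: greedyE; rewrite /x; bexp; lia.
have r3 : x - 'C(m + 6, 3) = 'C(m + 3, 2) + (m + 2) by rewrite /x; lia.
have g2 : greedy_top 2 ('C(m + 3, 2) + (m + 2)) = m + 3.
  by apply: greedyE; bexp; lia.
have r2 : 'C(m + 3, 2) + (m + 2) - 'C(m + 3, 2) = m + 2 by lia.
have g1 : greedy_top 1 (m + 2) = m + 2.
  by apply: greedyE; bexp; lia.
have x0 : (x == 0) = false by rewrite /x; bexp; lia.
rewrite /shadow_bound /= x0 g3 r3.
have -> : ('C(m + 3, 2) + (m + 2) == 0) = false by lia.
rewrite g2 r2.
have -> : (m + 2 == 0) = false by lia.
rewrite g1 !big_cons big_nil /= addn0 !addnA.
by [].
Qed.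


Lemma card_sup (T : finType) (P : {set T}) r :
  #|[set A : {set T} | (#|A| == r + #|P|) && (P \subset A)]| = 'C(#|~: P|, r).
Proof.
rewrite -cards_draws.
have -> : [set A : {set T} | (#|A| == r + #|P|) && (P \subset A)] =
    (fun D => P :|: D) @: [set D : {set T} | D \subset ~: P & #|D| == r].
  apply/setP => A; apply/idP/imsetP.
  - rewrite inE => /andP[/eqP cA PA]; exists (A :\: P).
      rewrite inE; apply/andP; split.
        by apply/subsetP => z; rewrite !inE => /andP[].
      have := cardsD A P; have -> : A :&: P = P by apply/setIidPr.
      by move=> ->; rewrite cA addnK.
    apply/setP => z; rewrite !inE; case: (boolP (z \in P)) => zP //=.
    by rewrite (subsetP PA z zP).
  - case=> D; rewrite inE => /andP[DP /eqP cD] ->.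
    rewrite inE subsetUl andbT cardsU.
    have -> : P :&: D = set0.
      apply/setP => z; rewrite !inE; apply/negP => /andP[zP zD].
      by have := subsetP DP z zD; rewrite inE zP.
    by rewrite cards0 subn0 cD addnC.
rewrite card_in_imset // => D1 D2; rewrite !inE => /andP[D1P _] /andP[D2P _] H.
apply/setP => z; move/setP: H => /(_ z); rewrite !inE.
case: (boolP (z \in P)) => zP //=.
have h1 : z \notin D1 by apply/negP => /(subsetP D1P); rewrite inE zP.
have h2 : z \notin D2 by apply/negP => /(subsetP D2P); rewrite inE zP.
by rewrite (negbTE h1) (negbTE h2).
Qed.

Section Cons.
Variables (N : nat) (a b c d : 'I_N).
Hypotheses (ab : a != b) (cd : c != d) (ac : a != c) (ad : a != d) (bc : b != c) (bd : b != d).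

Definition P1 := [set a; b].
Definition P2 := [set c; d].
Definition gc : rel 'I_N := fun i j =>
  [&& i != j, ~~ ((i \in P1) && (j \in P1)) & ~~ ((i \in P2) && (j \in P2))].

Lemma gc_simple : simple_graph gc.
Proof.
split.
  by move=> i j; rewrite /gc eq_sym (andbC (j \in P1)) (andbC (j \in P2)).
by move=> i; rewrite /gc eqxx.
Qed.

Lemma pair_sub (u v x y : 'I_N) (A : {set 'I_N}) : u != v -> u \in A -> v \in A ->
  u \in [set x; y] -> v \in [set x; y] -> [set x; y] \subset A.
Proof.
move=> uv uA vA; rewrite !inE => /orP[]/eqP eu /orP[]/eqP ev; subst;
  try by rewrite eqxx in uv.
- by apply/subsetP => z; rewrite !inE => /orP[]/eqP->.
- by apply/subsetP => z; rewrite !inE => /orP[]/eqP->.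
Qed.

Lemma clique_gc (A : {set 'I_N}) : clique gc A = ~~ (P1 \subset A) && ~~ (P2 \subset A).
Proof.
apply/idP/idP.
- move/forallP => H; apply/andP; split; apply/negP => sub.
  + have aA : a \in A by apply: (subsetP sub); rewrite !inE eqxx.
    have bA : b \in A by apply: (subsetP sub); rewrite !inE eqxx orbT.
    move: (H a); rewrite aA /= => /forallP/(_ b); rewrite bA ab /= /gc ab /P1 !inE !eqxx orbT.
    by [].
  + have cA : c \in A by apply: (subsetP sub); rewrite !inE eqxx.
    have dA : d \in A by apply: (subsetP sub); rewrite !inE eqxx orbT.
    move: (H c); rewrite cA /= => /forallP/(_ d); rewrite dA cd /= /gc cd /P2 !inE !eqxx orbT.
    by rewrite !andbF.
- case/andP => n1 n2; apply/forallP => u; apply/implyP => uA; apply/forallP => v.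
  apply/implyP => vA; apply/implyP => uv; rewrite /gc uv /=.
  apply/andP; split; apply/negP => /andP[uP vP].
  + by move/negP: n1; apply; apply: (pair_sub uv).
  + by move/negP: n2; apply; apply: (pair_sub uv).
Qed.

Definition Xr r := [set A : {set 'I_N} | (#|A| == r) && (P1 \subset A)].
Definition Yr r := [set A : {set 'I_N} | (#|A| == r) && (P2 \subset A)].

Lemma kr_gc r : kr gc r + #|Xr r :|: Yr r| = 'C(N, r).
Proof.
have -> : 'C(N, r) = 'C(#|'I_N|, r) by rewrite card_ord.
rewrite -card_draws.
rewrite -(cardsID (Xr r :|: Yr r) [set A : {set 'I_N} | #|A| == r]) addnC.
congr (_ + _); apply: eq_card => A; rewrite !inE ?clique_gc.
  by case: (#|A| == r).
by case: (#|A| == r) => /=; rewrite ?negb_or ?andbT.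
Qed.

Lemma cardX r : #|Xr (r + 2)| = 'C(N - 2, r).
Proof.
have c2 : #|P1| = 2 by rewrite /P1 cards2 ab.
have := card_sup P1 r; rewrite c2.
have -> : #|~: P1| = N - 2 by have := cardsC P1; rewrite c2 card_ord; lia.
by move=> <-.
Qed.

Lemma cardY r : #|Yr (r + 2)| = 'C(N - 2, r).
Proof.
have c2 : #|P2| = 2 by rewrite /P2 cards2 cd.
have := card_sup P2 r; rewrite c2.
have -> : #|~: P2| = N - 2 by have := cardsC P2; rewrite c2 card_ord; lia.
by move=> <-.
Qed.

Lemma P12 : #|P1 :|: P2| = 4.
Proof.
rewrite cardsU /P1 /P2 !cards2 ab cd.
have -> : [set a; b] :&: [set c; d] = set0.
  apply/setP => z; rewrite !inE; apply/negP => /andP[h1 h2].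
  move: ac ad bc bd.
  case/orP: h1 => /eqP zz; case/orP: h2 => /eqP zz'; rewrite zz in zz'; rewrite zz' eqxx //.
by rewrite cards0.
Qed.

Lemma kr3 : kr gc 3 = 'C(N, 3) - 2 * (N - 2).
Proof.
have := kr_gc 3; rewrite cardsU.
have -> : Xr 3 :&: Yr 3 = set0.
  apply/setP => A; rewrite !inE; apply/negP => /andP[/andP[/eqP cA s1] /andP[_ s2]].
  have : P1 :|: P2 \subset A by rewrite subUset s1 s2.
  by move/subset_leq_card; rewrite P12 cA.
rewrite cards0 subn0 (cardX 1) (cardY 1) bin1; lia.
Qed.

Lemma kr4 : 'C(N, 4) + 1 <= kr gc 4 + 2 * 'C(N - 2, 2).
Proof.
have := kr_gc 4; rewrite cardsU (cardX 2) (cardY 2).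
have h : 0 < #|Xr 4 :&: Yr 4|.
  apply/card_gt0P; exists (P1 :|: P2); rewrite !inE P12 eqxx subsetUl subsetUr //.
have h2 : #|Xr 4 :&: Yr 4| <= #|Xr 4| by apply: subset_leq_card; apply: subsetIl.
rewrite (cardX 2) in h2.
lia.
Qed.

End Cons.


Lemma exmax (P : nat -> Prop) B : (exists v, P v) -> (forall v, P v -> v <= B) ->
  exists m, P m /\ forall v, P v -> v <= m.
Proof.
elim: B => [|B IH] [v Pv] ub.
  exists v; split => // w Pw; have := ub w Pw; have := ub v Pv; lia.
case: (classic (P B.+1)) => PB; first by exists B.+1; split.
apply: IH; first by exists v.
move=> w Pw; have := ub w Pw; rewrite leq_eqVlt => /orP[/eqP E|] //.
by subst w.
Qed.

Theorem theorem5 (n : nat) : 6 < n ->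
  let x := 'C(n, 3) - 2 * (n - 2) in
  exists m, is_max_ks_kr 4 3 x m /\
    shadow_bound 3 4 x - 1 <= m <= shadow_bound 3 4 x.
Proof.
move=> hn.
have [p ->] : exists p, n = p + 7 by exists (n - 7); lia.
move=> x; rewrite /x xE sbE {x}.
set X := _ + _ + _.
set Bd := 'C(p + 6, 4) + _ + _.
pose Pv v := exists N (g : rel 'I_N), simple_graph g /\ kr g 3 <= X /\ kr g 4 = v.
have h0 : 0 < p + 7 by lia.
have h1 : 1 < p + 7 by lia.
have h5 : p + 5 < p + 7 by lia.
have h6 : p + 6 < p + 7 by lia.
pose a := Ordinal h0; pose b := Ordinal h1; pose c := Ordinal h5; pose d := Ordinal h6.
have ab : a != b by apply/eqP => /(congr1 val) /=; lia.
have cd : c != d by apply/eqP => /(congr1 val) /=; lia.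
have ac : a != c by apply/eqP => /(congr1 val) /=; lia.
have ad : a != d by apply/eqP => /(congr1 val) /=; lia.
have bc : b != c by apply/eqP => /(congr1 val) /=; lia.
have bd : b != d by apply/eqP => /(congr1 val) /=; lia.
have k3 := kr3 ab cd ac ad bc bd.
have k4 := kr4 ab cd ac ad bc bd.
rewrite xE in k3.
have e72 : p + 7 - 2 = p + 5 by lia.
rewrite e72 in k4.
have Pc : Pv (kr (gc a b c d) 4).
  exists (p + 7), (gc a b c d); split; first exact: gc_simple.
  by rewrite k3.
have [m [Pm mx]] : exists m, Pv m /\ forall v, Pv v -> v <= m.
  apply: (@exmax Pv Bd); first by exists (kr (gc a b c d) 4).
  by move=> v [N [g [_ [h3 <-]]]]; apply: upper.
exists m; split.
  split; first exact: Pm.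
  by move=> N g sg h3; apply: mx; exists N, g.
have mB : m <= Bd by case: Pm => N [g [_ [h3 <-]]]; apply: upper.
have := mx _ Pc; have := bE p; rewrite /Bd; lia.
Qed.
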